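(* Let $K,L,T$ be positive integers and $\lambda=\min\{K,L\}+T$. Let indices range over $r\in\{1,\ldots,K+T\}$, $c\in\{1,\ldots,L+T\}$, $e\in\mathbb{Z}_{\ge0}$. Then $\operatorname{N}(K,L,T)$ equals the optimal value of the binary linear program in the variables $U_e,R_{r,e},C_{c,e},M_{r,c,e}\in\{0,1\}$: minimize $\sum_e U_e$ subject to $M_{r,c,e}\le U_e$ for all $r,c,e$; $\sum_{(r,c)\neq(r',c')}M_{r,c,e}\le\lambda(1-M_{r',c',e})$ for all $e$, all $r'\le K$, $c'\le L$; $\sum_r R_{r,e}\le 1$ for all $e$; $\sum_c C_{c,e}\le1$ for all $e$; $\sum_e M_{r,c,e}=1$ for all $r,c$; $\sum_e R_{r,e}=1$ for all $r$; $\sum_e C_{c,e}=1$ for all $c$; $\sum_e e\,M_{r,c,e}=\sum_e e\,R_{r,e}+\sum_e e\,C_{c,e}$ for all $r,c$.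
   Context: A degree table with parameters $K,L,T$ is a tuple $(\alpha_{\mathrm p},\alpha_{\mathrm s},\beta_{\mathrm p},\beta_{\mathrm s})$ of nonnegative integer vectors of lengths $K,T,L,T$ such that, with $\alpha=(\alpha_{\mathrm p}\mid\alpha_{\mathrm s})$ (length $K+T$) and $\beta=(\beta_{\mathrm p}\mid\beta_{\mathrm s})$ (length $L+T$): (i) entries of $\alpha$ are distinct; (ii) entries of $\beta$ are distinct; (iii) for every integer $n\in\operatorname{Set}(\alpha_{\mathrm p})+\operatorname{Set}(\beta_{\mathrm p})$ there is a unique $i\in\operatorname{Set}(\alpha)$ and unique $j\in\operatorname{Set}(\beta)$ with $n=i+j$. $\operatorname{Set}(v)$ is the set of entries of $v$, $A+B=\{a+b\}$, $\operatorname{N}(\alpha,\beta)=|\operatorname{Set}(\alpha)+\operatorname{Set}(\beta)|$, and $\operatorname{N}(K,L,T)$ is the minimum of $\operatorname{N}(\alpha,\beta)$ over all degree tables with parameters $K,L,T$. *)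

(* Defs.v *)
From mathcomp Require Import all_boot.
Set Implicit Arguments. Unset Strict Implicit. Unset Printing Implicit Defensive.

(* Degree tables: vectors are sequences of natural numbers; alpha = ap ++ as_,
   beta = bp ++ bs. *)
Definition degree_table (K L T : nat) (ap as_ bp bs : seq nat) : Prop :=
  size ap = K /\ size as_ = T /\ size bp = L /\ size bs = T /\
      uniq (ap ++ as_) /\ uniq (bp ++ bs) /\
      forall n : nat,
        (exists a b, a \in ap /\ b \in bp /\ n = a + b) ->
        exists! ij : nat * nat,
          ij.1 \in ap ++ as_ /\ ij.2 \in bp ++ bs /\ n = ij.1 + ij.2.

Definition Nab (alpha beta : seq nat) : nat :=
  size (undup [seq a + b | a <- alpha, b <- beta]).

Definition DT_value (K L T v : nat) : Prop :=
  exists ap as_ bp bs, degree_table K L T ap as_ bp bs /\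
    v = Nab (ap ++ as_) (bp ++ bs).

Definition is_min (P : nat -> Prop) (v : nat) : Prop :=
  P v /\ forall w, P w -> v <= w.

(* Feasibility of the binary LP.  Row index r : 'I_(K+T) (0-based, so r' <= K
   becomes r' < K), column index c : 'I_(L+T), e : nat.  All variables vanish
   for e >= B, and sums over e are over e < B. *)
Definition LP_feasible (K L T B : nat) (U : nat -> bool)
  (R : 'I_(K + T) -> nat -> bool) (C : 'I_(L + T) -> nat -> bool)
  (M : 'I_(K + T) -> 'I_(L + T) -> nat -> bool) : Prop :=
  let lam := minn K L + T in
  (forall e, B <= e ->
         [/\ U e = false, (forall r, R r e = false), (forall c, C c e = false)
           & (forall r c, M r c e = false)]) /\
      (forall r c e, M r c e <= U e) /\
      (forall e (r' : 'I_(K + T)) (c' : 'I_(L + T)), r' < K -> c' < L ->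
         \sum_(p : 'I_(K + T) * 'I_(L + T) | p != (r', c')) (M p.1 p.2 e : nat)
           <= lam * (1 - M r' c' e)) /\
      (forall e, \sum_(r : 'I_(K + T)) (R r e : nat) <= 1) /\
      (forall e, \sum_(c : 'I_(L + T)) (C c e : nat) <= 1) /\
      (forall r c, \sum_(e < B) (M r c e : nat) = 1) /\
      (forall r, \sum_(e < B) (R r e : nat) = 1) /\
      (forall c, \sum_(e < B) (C c e : nat) = 1) /\
      (forall r c, \sum_(e < B) e * M r c e
                   = \sum_(e < B) e * R r e + \sum_(e < B) e * C c e).

Definition LP_value (K L T v : nat) : Prop :=
  exists B U R C M, @LP_feasible K L T B U R C M /\ v = \sum_(e < B) (U e : nat).

(* Main.v *)
Require Import Defs.
From mathcomp Require Import all_boot zify.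
From Stdlib Require Import Classical.

Lemma sum_count B (U : nat -> bool) : \sum_(e < B) (U e : nat) = count U (iota 0 B).
Proof.
have := @big_mkord nat 0 addn B xpredT (fun i => (U i : nat)); rewrite /= => <-.
rewrite /index_iota subn0 -sum1_count [RHS]big_mkcond /=.
apply: eq_bigr => i _; by case: (U i).
Qed.

Lemma sum_eq1 B x : x < B -> \sum_(e < B) ((x == e) : nat) = 1.
Proof.
move=> hx; rewrite (bigD1 (Ordinal hx)) //= eqxx big1 // => i hi.
case: eqP => // E; move: hi; by rewrite -val_eqE /= E eqxx.
Qed.

Lemma sum_eqx B x : x < B -> \sum_(e < B) e * (x == e) = x.
Proof.
move=> hx; rewrite (bigD1 (Ordinal hx)) //= eqxx muln1 big1 ?addn0 // => i hi.
case: eqP => [E|]; last by rewrite muln0.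
move: hi; by rewrite -val_eqE /= E eqxx.
Qed.

Lemma sum_le1 (I : finType) (f : I -> bool) :
  (forall i j, f i -> f j -> i = j) -> \sum_i (f i : nat) <= 1.
Proof.
move=> H; case: (pickP f) => [i0 h0|h0].
  rewrite (bigD1 i0) //= h0 big1 // => j hj; case fj: (f j) => //.
  by rewrite (H _ _ h0 fj) eqxx in hj.
by rewrite big1 // => i _; rewrite h0.
Qed.

Lemma le1_inj (I : finType) (f : I -> bool) i j :
  \sum_k (f k : nat) <= 1 -> f i -> f j -> i = j.
Proof.
move=> hs fi fj; apply/eqP; apply/negPn/negP => hij.
move: hs; rewrite (bigD1 i) //= fi (bigD1 j) /=; last by rewrite eq_sym.
by rewrite fj.
Qed.

Lemma one_hot (f : nat -> bool) B : (forall e, B <= e -> f e = false) ->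
  \sum_(e<B) (f e : nat) = 1 -> exists2 e0, e0 < B & forall e, f e = (e == e0).
Proof.
move=> hv hs.
case: (pickP (fun i : 'I_B => f i)) => [i0 h0 | h0]; last first.
  by move: hs; rewrite big1 // => i _; rewrite h0.
exists (val i0) => [|e]; first exact: ltn_ord.
case: (ltnP e B) => he; last first.
  rewrite hv //; apply/esym/eqP => E; move: (ltn_ord i0); by rewrite -E ltnNge he.
case fe: (f e).
  have := @le1_inj _ (fun i : 'I_B => f i) (Ordinal he) i0 (eq_leq hs).
  by move=> /(_ fe h0) <-; rewrite eqxx.
by case: eqP => // E; rewrite -fe E.
Qed.

Lemma one_hot_val (f : nat -> bool) B : (forall e, B <= e -> f e = false) ->
  \sum_(e<B) (f e : nat) = 1 ->
  (forall e, f e = (e == \sum_(e<B) e * f e)) /\ \sum_(e<B) e * f e < B.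
Proof.
move=> hv hs; case: (@one_hot f B hv hs) => e0 he0 H.
have -> : \sum_(e<B) e * f e = e0.
  rewrite (eq_bigr (fun e : 'I_B => e * (e0 == e))) ?sum_eqx // => i _.
  by rewrite H eq_sym.
by [].
Qed.

Lemma ex_is_min (P : nat -> Prop) : (exists n, P n) -> exists v, P v /\ forall w, P w -> v <= w.
Proof.
move=> [n hn]; elim/ltn_ind: n hn => n IH hn.
case: (classic (exists w, w < n /\ P w)) => [[w [hw pw]]|H]; first exact: IH hw pw.
exists n; split => // w pw; rewrite leqNgt; apply/negP => hw; apply: H; by exists w.
Qed.

Lemma memle (s : seq nat) x : x \in s -> x <= sumn s.
Proof.
elim: s => //= y s IH; rewrite inE => /orP [/eqP -> | /IH h]; first exact: leq_addr.
exact: leq_trans h (leq_addl _ _).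
Qed.

Lemma dt_to_lp K L T ap as_ bp bs : degree_table K L T ap as_ bp bs ->
  LP_value K L T (Nab (ap ++ as_) (bp ++ bs)).
Proof.
case=> [sa [sas [sb [sbs [ua [ub hu]]]]]].
rewrite /Nab.
set al := ap ++ as_. set be := bp ++ bs.
have sal : size al = K + T by rewrite size_cat sa sas.
have sbe : size be = L + T by rewrite size_cat sb sbs.
set S := [seq a + b | a <- al, b <- be].
pose B := (sumn al + sumn be).+1.
pose a (r : 'I_(K + T)) := nth 0 al r.
pose b (c : 'I_(L + T)) := nth 0 be c.
have aal r : a r \in al by apply: mem_nth; rewrite sal.
have bbe c : b c \in be by apply: mem_nth; rewrite sbe.
have aB r : a r < B by rewrite /B ltnS; exact: leq_trans (memle _ _ (aal r)) (leq_addr _ _).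
have bB c : b c < B by rewrite /B ltnS; exact: leq_trans (memle _ _ (bbe c)) (leq_addl _ _).
have abB r c : a r + b c < B by rewrite /B ltnS; apply: leq_add; apply: memle.
have SB x : x \in S -> x < B.
  by move=> /allpairsP [[x1 y1] /= [hx hy ->]]; rewrite /B ltnS; apply: leq_add; apply: memle.
have inja r r' : a r = a r' -> r = r'.
  move=> Ea; apply/val_inj/eqP; rewrite -(@nth_uniq _ 0 al) ?sal ?ltn_ord //.
  by apply/eqP.
have injb c c' : b c = b c' -> c = c'.
  move=> Ea; apply/val_inj/eqP; rewrite -(@nth_uniq _ 0 be) ?sbe ?ltn_ord //.
  by apply/eqP.
exists B, (fun e => e \in S), (fun r e => a r == e), (fun c e => b c == e),
  (fun r c e => a r + b c == e).
split; last first.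
  rewrite sum_count -size_filter; apply: perm_size; apply: uniq_perm.
  - exact: undup_uniq.
  - exact: filter_uniq (iota_uniq _ _).
  move=> x; rewrite mem_undup mem_filter mem_iota /=.
  rewrite add0n; apply/idP/andP => [h|[h _]//]; by split => //; apply: SB.
split.
  move=> e he; split => [|r|c|r c].
  - apply/negbTE/negP => /SB; by rewrite ltnNge he.
  - by case: eqP => // E; move: he; rewrite -E leqNgt aB.
  - by case: eqP => // E; move: he; rewrite -E leqNgt bB.
  - by case: eqP => // E; move: he; rewrite -E leqNgt abB.
split.
  move=> r c e; case: eqP => // <-.
  suff -> : (a r + b c \in S) by [].
  exact: allpairs_f.
split.
  move=> e r' c' hr' hc'.
  case: (eqVneq (a r' + b c') e) => [E|NE].
    rewrite (_ : 1 - true = 0) // muln0 leqn0; apply/eqP; apply: big1 => [[r c]] /= hp.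
    case: eqP => // E2; exfalso.
    have ha : a r' \in ap by rewrite /a /al nth_cat sa hr'; apply: mem_nth; rewrite sa.
    have hb : b c' \in bp by rewrite /b /be nth_cat sb hc'; apply: mem_nth; rewrite sb.
    have [ij [_ hij]] := hu e (ex_intro _ (a r') (ex_intro _ (b c') (conj ha (conj hb (esym E))))).
    have e1 := hij (a r, b c) (conj (aal r) (conj (bbe c) (esym E2))).
    have e2 := hij (a r', b c') (conj (aal r') (conj (bbe c') (esym E))).
    move: e2; rewrite e1 => -[/inja Er /injb Ec].
    by rewrite Er Ec eqxx in hp.
  rewrite (_ : 1 - false = 1) // muln1.
  apply: leq_trans (_ : \sum_p (a p.1 + b p.2 == e : nat) <= _).
    by rewrite [X in _ <= X](bigID (fun p => p != (r', c'))) /= leq_addr.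
  rewrite -(pair_bigA _ (fun r c => (a r + b c == e : nat))).
  have h1 : \sum_r \sum_c (a r + b c == e : nat) <= K + T.
    apply: leq_trans (_ : \sum_(r : 'I_(K+T)) 1 <= _); last by rewrite sum1_card card_ord.
    apply: leq_sum => r _; apply: sum_le1 => c c2 /eqP h /eqP h2; apply: injb.
    by apply/eqP; rewrite -(eqn_add2l (a r)) h h2.
  have h2 : \sum_r \sum_c (a r + b c == e : nat) <= L + T.
    rewrite exchange_big.
    apply: leq_trans (_ : \sum_(c : 'I_(L+T)) 1 <= _); last by rewrite sum1_card card_ord.
    apply: leq_sum => c _; apply: sum_le1 => r r2 /eqP h /eqP h2; apply: inja.
    by apply/eqP; rewrite -(eqn_add2r (b c)) h h2.
  by rewrite addn_minl leq_min h1 h2.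
split.
  by move=> e; apply: sum_le1 => r r2 /eqP h /eqP h2; apply: inja; rewrite h h2.
split.
  by move=> e; apply: sum_le1 => c c2 /eqP h /eqP h2; apply: injb; rewrite h h2.
split; first by move=> r c; exact: sum_eq1.
split; first by move=> r; exact: sum_eq1.
split; first by move=> c; exact: sum_eq1.
by move=> r c; rewrite !sum_eqx.
Qed.

Lemma lp_to_dt K L T v : LP_value K L T v -> exists w, DT_value K L T w /\ w <= v.
Proof.
case=> B [U [R [C [M [hF ->]]]]].
case: hF => [hv [hMU [hMc [hR1 [hC1 [hM [hR [hC hMe]]]]]]]].
pose a r := \sum_(e<B) e * R r e.
pose b c := \sum_(e<B) e * C c e.
have vR r e : B <= e -> R r e = false by move=> he; case: (hv e he).
have vC c e : B <= e -> C c e = false by move=> he; case: (hv e he).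
have vM r c e : B <= e -> M r c e = false by move=> he; case: (hv e he).
have Ra r e : R r e = (e == a r) by case: (@one_hot_val (R r) B (vR r) (hR r)).
have Cb c e : C c e = (e == b c) by case: (@one_hot_val (C c) B (vC c) (hC c)).
have Mab r c e : M r c e = (e == a r + b c).
  by case: (@one_hot_val (M r c) B (vM r c) (hM r c)) => H _; rewrite H hMe.
have inja r r' : a r = a r' -> r = r'.
  move=> Ea; apply: (@le1_inj _ (fun r0 => R r0 (a r)) _ _ (hR1 (a r))).
    by rewrite Ra eqxx.
  by rewrite Ra Ea eqxx.
have injb c c' : b c = b c' -> c = c'.
  move=> Ea; apply: (@le1_inj _ (fun c0 => C c0 (b c)) _ _ (hC1 (b c))).
    by rewrite Cb eqxx.
  by rewrite Cb Ea eqxx.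
pose af (i : nat) := \sum_(r : 'I_(K + T) | val r == i) a r.
pose bf (i : nat) := \sum_(c : 'I_(L + T) | val c == i) b c.
have afE (r : 'I_(K + T)) : af r = a r by rewrite /af (big_pred1 r) // => r0; exact: val_eqE.
have bfE (c : 'I_(L + T)) : bf c = b c by rewrite /bf (big_pred1 c) // => c0; exact: val_eqE.
pose ap := map af (iota 0 K). pose as_ := map af (iota K T).
pose bp := map bf (iota 0 L). pose bs := map bf (iota L T).
have alE : ap ++ as_ = map af (iota 0 (K + T)) by rewrite iotaD add0n map_cat.
have beE : bp ++ bs = map bf (iota 0 (L + T)) by rewrite iotaD add0n map_cat.
have memal x : x \in map af (iota 0 (K + T)) -> exists r : 'I_(K + T), x = a r.
  move=> /mapP [i]; rewrite mem_iota add0n /= => hi ->; exists (Ordinal hi).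
  by rewrite -afE.
have membe x : x \in map bf (iota 0 (L + T)) -> exists c : 'I_(L + T), x = b c.
  move=> /mapP [i]; rewrite mem_iota add0n /= => hi ->; exists (Ordinal hi).
  by rewrite -bfE.
have memap x : x \in ap -> exists r : 'I_(K + T), r < K /\ x = a r.
  move=> /mapP [i]; rewrite mem_iota add0n /= => hi ->.
  have hi' : i < K + T by apply: leq_trans hi (leq_addr _ _).
  exists (Ordinal hi'); split => //; by rewrite -afE.
have membp x : x \in bp -> exists c : 'I_(L + T), c < L /\ x = b c.
  move=> /mapP [i]; rewrite mem_iota add0n /= => hi ->.
  have hi' : i < L + T by apply: leq_trans hi (leq_addr _ _).
  exists (Ordinal hi'); split => //; by rewrite -bfE.
have ain r : a r \in ap ++ as_.
  by rewrite alE -(afE r); apply: map_f; rewrite mem_iota leq0n add0n ltn_ord.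
have bin c : b c \in bp ++ bs.
  by rewrite beE -(bfE c); apply: map_f; rewrite mem_iota leq0n add0n ltn_ord.
exists (Nab (ap ++ as_) (bp ++ bs)); split.
  exists ap, as_, bp, bs; split => //.
  split; first by rewrite size_map size_iota.
  split; first by rewrite size_map size_iota.
  split; first by rewrite size_map size_iota.
  split; first by rewrite size_map size_iota.
  split.
    rewrite alE map_inj_in_uniq ?iota_uniq // => i j; rewrite !mem_iota !add0n /= => hi hj E.
    have := inja (Ordinal hi) (Ordinal hj); rewrite -!afE /=.
    by move=> /(_ E) /(congr1 val).
  split.
    rewrite beE map_inj_in_uniq ?iota_uniq // => i j; rewrite !mem_iota !add0n /= => hi hj E.
    have := injb (Ordinal hi) (Ordinal hj); rewrite -!bfE /=.
    by move=> /(_ E) /(congr1 val).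
  move=> n [x [y [hx [hy ->]]]].
  case: (memap x hx) => r' [hr' ->]; case: (membp y hy) => c' [hc' ->].
  have Mz r c : (r, c) != (r', c') -> M r c (a r' + b c') = false.
    move=> hp; have := hMc (a r' + b c') r' c' hr' hc'.
    rewrite Mab eqxx (_ : 1 - true = 0) // muln0 leqn0 => H.
    apply/negbTE/negP => hm; move: H; by rewrite (bigD1 (r, c)) //= hm.
  exists (a r', b c'); split; first by split; [exact: ain | split; [exact: bin|]].
  move=> [x1 y1] /= [hx1 [hy1 E]].
  rewrite alE in hx1; rewrite beE in hy1.
  case: (memal x1 hx1) => r Ex; case: (membe y1 hy1) => c Ey; subst x1 y1.
  have hm : M r c (a r' + b c') by rewrite Mab E eqxx.
  case: (eqVneq (r, c) (r', c')) => [[-> ->] // | /Mz]; by rewrite hm.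
rewrite sum_count -size_filter /Nab.
apply: uniq_leq_size; first exact: undup_uniq.
move=> s; rewrite mem_undup => /allpairsP [[x y] /= [hx hy ->]].
rewrite alE in hx; rewrite beE in hy.
case: (memal x hx) => r ->; case: (membe y hy) => c ->.
have hm : M r c (a r + b c) by rewrite Mab eqxx.
have hU : U (a r + b c).
  by move: (hMU r c (a r + b c)); rewrite hm; case: (U _).
have abB : a r + b c < B.
  rewrite ltnNge; apply/negP => hge; case: (hv _ hge) => _ _ _ /(_ r c).
  by rewrite hm.
by rewrite mem_filter hU mem_iota leq0n add0n abB.
Qed.

Lemma dt_exists K L T : 0 < K + T -> exists v, DT_value K L T v.
Proof.
move=> m0.
pose m := K + T. pose f j := j * m.
pose ap := iota 0 K. pose as_ := iota K T.
pose bp := map f (iota 0 L). pose bs := map f (iota L T).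
have alE : ap ++ as_ = iota 0 m by rewrite /m iotaD add0n.
have beE : bp ++ bs = map f (iota 0 (L + T)) by rewrite iotaD add0n map_cat.
exists (Nab (ap ++ as_) (bp ++ bs)), ap, as_, bp, bs; split => //.
split; first by rewrite size_iota.
split; first by rewrite size_iota.
split; first by rewrite size_map size_iota.
split; first by rewrite size_map size_iota.
split; first by rewrite alE iota_uniq.
split.
  rewrite beE map_inj_uniq ?iota_uniq // => i j /eqP.
  by rewrite /f eqn_pmul2r // => /eqP.
move=> n [x [y [hx [hy ->]]]].
have hxm : x < m by move: hx; rewrite mem_iota add0n /m => /andP [_ h]; exact: ltn_addr.
case/mapP: hy => j hj ->.
have hjL : j < L + T by move: hj; rewrite mem_iota add0n => /andP [_ h]; exact: ltn_addr.
exists (x, f j); split.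
  split; first by rewrite alE mem_iota add0n hxm.
  split => //; rewrite beE; apply: map_f.
  by rewrite mem_iota add0n leq0n.
move=> [x' y'] /= [hx' [hy' E]].
rewrite alE mem_iota add0n /= in hx'.
rewrite beE in hy'; case/mapP: hy' => j' _ Ey; subst y'.
have xx : x = x'.
  have := congr1 (fun z => z %% m) E.
  by rewrite /= /f !(addnC _ (_ * m)) !modnMDl !modn_small.
subst x'.
by move/addnI: E => ->.
Qed.

Theorem theorem9 (K L T : nat) (hK : 0 < K) (hL : 0 < L) (hT : 0 < T) :
  exists v : nat, is_min (DT_value K L T) v /\ is_min (LP_value K L T) v.
Proof.
have [v0 [hv0 hmin]] := ex_is_min _ (dt_exists K L T (ltn_addr T hK)).
exists v0; split => //; split.
  by case: hv0 => ap [as_ [bp [bs [hdt ->]]]]; exact: (dt_to_lp _ _ _ _ _ _ _ hdt).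
move=> w hw; case: (lp_to_dt _ _ _ _ hw) => d [hd hdw]; exact: leq_trans (hmin _ hd) hdw.
Qed.
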